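(* Let $k\ge1$ and $\sigma\in\mathcal P_{4k}\setminus\mathcal D_{4k}$. With the sets $D_1,\dots,D_4,O_1,O_2,O_3,O_{4,1},O_{4,2},O_5,O_6$ defined in the context, $$\mathrm{Ord}_1:=|D_1|+\tfrac35|D_2|+\tfrac35|D_3|+\tfrac15|D_4|+\tfrac65|O_1|+\tfrac12|O_2|+\tfrac3{10}|O_3|-\tfrac15|O_{4,1}|-\tfrac15|O_{4,2}|-\tfrac25|O_5|-\tfrac35|O_6|<\frac{6k}{5}.$$
   Context: $\mathcal P_{4k}$ is the set of permutations $\sigma$ of $\{1,\dots,4k\}$ with $\sigma_1<\sigma_3<\dots<\sigma_{4k-1}$ and $\sigma_{2\ell-1}<\sigma_{2\ell}$ for all $\ell$; $\mathcal D_{4k}=\{\sigma\in\mathcal P_{4k}:\lceil\sigma_{2\ell-1}/4\rceil=\lceil\sigma_{2\ell}/4\rceil\ \forall\ell\}$. For $\sigma\in\mathcal P_{4k}$ consider the $2k$ pairs $(i,j)=(\sigma_{2\ell-1},\sigma_{2\ell})$, $1\le\ell\le2k$ (so $i<j$). For an index $m$ let $r(m)\in\{1,2,3,4\}$ with $r(m)\equiv m\pmod 4$, and call $\lceil m/4\rceil$ its block. A pair $(i,j)$ with $\lceil i/4\rceil=\lceil j/4\rceil$ belongs to $D_1$ if $(r(i),r(j))=(1,2)$; to $D_2$ if $(r(i),r(j))\in\{(1,3),(1,4)\}$; to $D_3$ if $(r(i),r(j))\in\{(2,3),(2,4)\}$; to $D_4$ if $(r(i),r(j))=(3,4)$. A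 pair with $\lceil i/4\rceil<\lceil j/4\rceil$ belongs to $O_1$ if $(r(i),r(j))=(1,1)$; to $O_2$ if $\{r(i),r(j)\}=\{1,2\}$; to $O_3$ if one of $r(i),r(j)$ is $1$ and the other is $3$ or $4$; to $O_{4,1}$ if $(r(i),r(j))=(2,2)$; to $O_{4,2}$ if $(r(i),r(j))=(3,3)$; to $O_{5,1}$ if one of $r(i),r(j)$ is $2$ and the other is $3$ or $4$; to $O_{5,2}$ if $\{r(i),r(j)\}=\{3,4\}$; to $O_6$ if $(r(i),r(j))=(4,4)$. Set $O_5=O_{5,1}\cup O_{5,2}$. $|\cdot|$ denotes cardinality. *)

(* Defs.v *)
From mathcomp Require Import all_boot all_order all_algebra.
Set Implicit Arguments. Unset Strict Implicit. Unset Printing Implicit Defensive.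
Import Order.TTheory GRing.Theory Num.Theory.

(* A permutation sigma of {1,...,4k} is represented by the sequence
   s = [:: sigma_1; sigma_2; ...; sigma_{4k}], i.e. sigma_i = nth 0 s (i-1). *)

Definition sg (s : seq nat) (i : nat) : nat := nth 0 s i.-1.

Definition inP (k : nat) (s : seq nat) : Prop :=
  [/\ perm_eq s (iota 1 (4 * k)),
      (forall l, 1 <= l < 2 * k -> sg s (2 * l - 1) < sg s (2 * l + 1)) &
      (forall l, 1 <= l <= 2 * k -> sg s (2 * l - 1) < sg s (2 * l))].

Definition blk (m : nat) : nat := (m + 3) %/ 4.
(* r(m) in {1,2,3,4}, r(m) = m mod 4 *)
Definition rr (m : nat) : nat := ((m + 3) %% 4).+1.

Definition inD (k : nat) (s : seq nat) : Prop :=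
  inP k s /\ forall l, 1 <= l <= 2 * k -> blk (sg s (2 * l - 1)) = blk (sg s (2 * l)).

Definition pairs (k : nat) (s : seq nat) : seq (nat * nat) :=
  [seq (sg s (2 * l - 1), sg s (2 * l)) | l <- iota 1 (2 * k)].

Definition same_blk (p : nat * nat) : bool := blk p.1 == blk p.2.
Definition diff_blk (p : nat * nat) : bool := blk p.1 < blk p.2.
Definition rs (p : nat * nat) : nat * nat := (rr p.1, rr p.2).

Definition isD1 p := same_blk p && (rs p == (1, 2)).
Definition isD2 p := same_blk p && ((rs p == (1, 3)) || (rs p == (1, 4))).
Definition isD3 p := same_blk p && ((rs p == (2, 3)) || (rs p == (2, 4))).
Definition isD4 p := same_blk p && (rs p == (3, 4)).

Definition unord (a b : nat) (p : nat * nat) : bool :=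
  (rs p == (a, b)) || (rs p == (b, a)).

Definition isO1 p := diff_blk p && (rs p == (1, 1)).
Definition isO2 p := diff_blk p && unord 1 2 p.
Definition isO3 p := diff_blk p && (unord 1 3 p || unord 1 4 p).
Definition isO41 p := diff_blk p && (rs p == (2, 2)).
Definition isO42 p := diff_blk p && (rs p == (3, 3)).
Definition isO51 p := diff_blk p && (unord 2 3 p || unord 2 4 p).
Definition isO52 p := diff_blk p && unord 3 4 p.
Definition isO5 p := isO51 p || isO52 p.
Definition isO6 p := diff_blk p && (rs p == (4, 4)).

Definition card_of (P : pred (nat * nat)) (k : nat) (s : seq nat) : nat :=
  count P (pairs k s).

Local Open Scope ring_scope.

Definition Ord1 (k : nat) (s : seq nat) : rat :=
  (card_of isD1 k s)%:R + 3%:R / 5%:R * (card_of isD2 k s)%:R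
  + 3%:R / 5%:R * (card_of isD3 k s)%:R + 1 / 5%:R * (card_of isD4 k s)%:R
  + 6%:R / 5%:R * (card_of isO1 k s)%:R + 1 / 2%:R * (card_of isO2 k s)%:R
  + 3%:R / 10%:R * (card_of isO3 k s)%:R - 1 / 5%:R * (card_of isO41 k s)%:R
  - 1 / 5%:R * (card_of isO42 k s)%:R - 2%:R / 5%:R * (card_of isO5 k s)%:R
  - 3%:R / 5%:R * (card_of isO6 k s)%:R.

(* Main.v *)
Require Import Defs.
From mathcomp Require Import all_boot all_order all_algebra.
From mathcomp Require Import zify ring lra.
Import Order.TTheory GRing.Theory Num.Theory.
Local Open Scope ring_scope.

Definition Wi (p : nat * nat) : int :=
  (10 * isD1 p + 6 * isD2 p + 6 * isD3 p + 2 * isD4 p + 12 * isO1 p + 5 * isO2 p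
   + 3 * isO3 p)%N%:Z - (2 * isO41 p + 2 * isO42 p + 4 * isO5 p + 6 * isO6 p)%N%:Z.

Lemma sumWi (L : seq (nat*nat)) : \sum_(p <- L) Wi p =
  (10 * count isD1 L + 6 * count isD2 L + 6 * count isD3 L + 2 * count isD4 L
   + 12 * count isO1 L + 5 * count isO2 L + 3 * count isO3 L)%N%:Z
  - (2 * count isO41 L + 2 * count isO42 L + 4 * count isO5 L + 6 * count isO6 L)%N%:Z.
Proof.
elim: L => [|x L IH]; first by rewrite big_nil.
rewrite big_cons IH /Wi /=; lia.
Qed.

Lemma Ord1_sum k s : Ord1 k s = (\sum_(p <- pairs k s) Wi p)%:~R / 10%:R.
Proof.
rewrite sumWi /Ord1 /card_of intrB !pmulrn !PoszD ?PoszM !intrD ?intrM.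
field. all: try by [].
Qed.

Definition gg (r : nat) : int := if r == 1%N then 6 else if r == 2%N then 0 else - 1.
Definition hh (x y : nat) : int :=
  match x, y with
  | 1, 2 | 3, 4 => 4
  | 1, 3 | 1, 4 => 1
  | 2, 3 | 2, 4 => 7
  | _, _ => 0 end.
Definition HH (p : nat * nat) : int := if same_blk p then hh (rr p.1) (rr p.2) else 0.

Lemma rr_range m : (0 < rr m <= 4)%N.
Proof. rewrite /rr; have := ltn_pmod (m+3) (isT : (0 < 4)%N); lia. Qed.

Lemma blk_rr m : (m + 4 = 4 * blk m + rr m)%N.
Proof. rewrite /blk /rr; have := divn_eq (m+3) 4; lia. Qed.

Arguments rr : simpl never.
Arguments blk : simpl never.

Lemma wle i j : (i < j)%N -> Wi (i,j) <= gg (rr i) + gg (rr j) + HH (i,j).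
Proof.
move=> ij; clear -ij.
have e1 := blk_rr i; have e2 := blk_rr j.
have r1 := rr_range i; have r2 := rr_range j.
have hle : (blk i <= blk j)%N by rewrite /blk leq_div2r // leq_add2r ltnW.
have hs : blk i = blk j -> (rr i < rr j)%N by lia.
have [hlt|heq] : (blk i < blk j)%N \/ blk i = blk j by lia.
- have H1 := ltn_eqF hlt; clear hs e1 e2 hle.
  rewrite /Wi /HH /isD1 /isD2 /isD3 /isD4 /isO1 /isO2 /isO3 /isO41 /isO42 /isO5 /isO51 /isO52 /isO6 /unord /same_blk /diff_blk /rs.
  move: r1 r2 H1 hlt; rewrite /fst /snd.
  move: (rr i) (rr j) (blk i) (blk j) => a b c d.
  move=> + + -> ->.
  case: a => [|[|[|[|[|a]]]]] //; case: b => [|[|[|[|[|b]]]]] //.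
- move: (hs heq) => {hs} hs; clear e1 e2 hle.
  rewrite /Wi /HH /isD1 /isD2 /isD3 /isD4 /isO1 /isO2 /isO3 /isO41 /isO42 /isO5 /isO51 /isO52 /isO6 /unord /same_blk /diff_blk /rs.
  move: r1 r2 hs heq; rewrite /fst /snd.
  move: (rr i) (rr j) (blk i) (blk j) => a b c d.
  move=> + + + ->; rewrite eqxx ltnn.
  case: a => [|[|[|[|[|a]]]]] //; case: b => [|[|[|[|[|b]]]]] //.
Qed.

Definition coords (L : seq (nat * nat)) : seq nat := flatten [seq [:: p.1; p.2] | p <- L].

Lemma coords_cons p L : coords (p :: L) = [:: p.1, p.2 & coords L].
Proof. by []. Qed.

Lemma pairs_alt k s : pairs k s = [seq (nth 0 s l.*2, nth 0 s l.*2.+1) | l <- iota 0 (2 * k)].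
Proof.
rewrite /pairs (_ : iota 1 (2 * k) = map (addn 1) (iota 0 (2 * k))); last by rewrite -iotaDl.
rewrite -map_comp; apply/eq_map => l /=.
rewrite /sg; congr (_, _); congr nth; lia.
Qed.

Lemma coords_take n (s : seq nat) : size s = n.*2 ->
  coords [seq (nth 0 s l.*2, nth 0 s l.*2.+1) | l <- iota 0 n] = s.
Proof.
elim: n s => [|n IH] [|x [|y s]] //= hs.
have hs' : size s = n.*2 by move: hs; rewrite doubleS => -[].
rewrite (_ : iota 1 n = map (addn 1) (iota 0 n)); last by rewrite -iotaDl.
rewrite -map_comp.
have -> : [seq ((fun l => (nth 0 [:: x, y & s] l.*2, nth 0 [:: x, y & s] l.*2.+1)) \o addn 1) i | i <- iota 0 n]
  = [seq (nth 0 s l.*2, nth 0 s l.*2.+1) | l <- iota 0 n] by [].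
by rewrite -[in RHS](IH s hs').
Qed.

Lemma coords_pairs k s : size s = (4 * k)%N -> coords (pairs k s) = s.
Proof. by move=> hs; rewrite pairs_alt coords_take // hs; lia. Qed.

Lemma sum_coords (F : nat -> int) L :
  \sum_(p <- L) (F p.1 + F p.2) = \sum_(x <- coords L) F x.
Proof.
elim: L => [|p L IH]; first by rewrite !big_nil.
by rewrite big_cons coords_cons !big_cons IH addrA.
Qed.

Lemma mem_coords p L : p \in L -> (p.1 \in coords L) && (p.2 \in coords L).
Proof.
elim: L => [|q L IH] //; rewrite inE coords_cons !inE => /orP [/eqP ->|/IH /andP[-> ->]].
  by rewrite !eqxx !orbT.
by rewrite !orbT.
Qed.

Lemma mem_coords' p L x : p \in L -> x \in [:: p.1; p.2] -> x \in coords L.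
Proof.
move=> /mem_coords /andP[h1 h2]; rewrite !inE => /orP[]/eqP -> //.
Qed.

Arguments mem_coords' {p L x}.
Arguments mem_coords {p L}.

Lemma coords_share L p q x : uniq (coords L) -> p \in L -> q \in L ->
  x \in [:: p.1; p.2] -> x \in [:: q.1; q.2] -> p = q.
Proof.
have key : forall a L' y, a.1 \notin a.2 :: coords L' -> a.2 \notin coords L' ->
    y \in [:: a.1; a.2] -> y \in coords L' -> False.
  move=> a L' y n1 n2; rewrite !inE => /orP[]/eqP -> h.
    by move: n1; rewrite inE h orbT.
  by rewrite h in n2.
elim: L => [|a L IH] //; rewrite coords_cons => /= /and3P[na1 na2 hu].
move=> pin qin hx1 hx2; move: pin qin; rewrite !inE => /orP[/eqP ep|pL] /orP[/eqP eq|qL].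
- by rewrite ep eq.
- subst; case: (key _ _ _ na1 na2 hx1 (mem_coords' qL hx2)).
- subst; case: (key _ _ _ na1 na2 hx2 (mem_coords' pL hx1)).
- exact: IH.
Qed.

Lemma coords_filter_subseq P L : subseq (coords (filter P L)) (coords L).
Proof.
elim: L => [|a L IH] //; rewrite [filter _ _]/=; case: (P a).
  by rewrite !coords_cons /= !eqxx.
apply: (subseq_trans IH); rewrite coords_cons.
exact: (subseq_trans (subseq_cons _ a.2) (subseq_cons _ a.1)).
Qed.

Lemma block_bound R : (forall q, q \in R -> [&& 0 < q.1, q.1 < q.2 & q.2 <= 4])%N -> uniq (coords R) ->
  \sum_(q <- R) hh q.1 q.2 <= 8 /\
  (forall z, (0 < z <= 4)%N -> z \notin coords R -> \sum_(q <- R) hh q.1 q.2 <= 7).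
Proof.
case: R => [|a [|b [|c R']]] hR hu.
- by rewrite big_nil.
- rewrite big_cons big_nil addr0.
  move: (hR a (mem_head _ _)) hu; case: a {hR} => x y /=.
  by case: x => [|[|[|[|[|x]]]]] //; case: y => [|[|[|[|[|y]]]]].
- rewrite !big_cons big_nil addr0.
  move: (hR a (mem_head _ _)) (hR b ltac:(by rewrite !inE eqxx orbT)) hu.
  case: a {hR} => x y; case: b => x' y' /= h1 h2.
  move: h1; case: x => [|[|[|[|[|x]]]]] //; case: y => [|[|[|[|[|y]]]]] // _;
  move: h2; case: x' => [|[|[|[|[|x']]]]] //; case: y' => [|[|[|[|[|y']]]]] // _ //= _;
  split => // z; case: z => [|[|[|[|[|z]]]]] //.
- exfalso.
  have hs : (size (coords [:: a, b, c & R']) <= size (iota 1 4))%N.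
    apply: uniq_leq_size => // x hx.
    have [q hq hxq] : exists2 q, q \in [:: a, b, c & R'] & x \in [:: q.1; q.2].
      move: hx; rewrite /coords => /flattenP [l /mapP [q hq ->] hl]; by exists q.
    rewrite mem_iota; move: (hR q hq) hxq; rewrite !inE => /and3P[h1 h2 h3] /orP[]/eqP ->. 1,2: move: h1 h2 h3; case: q {hq} => u v /=; lia.
  by move: hs; rewrite !coords_cons /=.
Qed.

Arguments mem_coords' {p L x}.
Arguments mem_coords {p L}.

Lemma coordsP L x : x \in coords L -> exists2 p, p \in L & x \in [:: p.1; p.2].
Proof. by rewrite /coords => /flattenP [l /mapP [q hq ->] hl]; exists q. Qed.

Lemma coords_map (f : nat -> nat) L :
  coords [seq (f p.1, f p.2) | p <- L] = map f (coords L).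
Proof. by elim: L => [|p L IH] //=; rewrite !coords_cons IH. Qed.

Lemma rr_shift c k : rr (c + 4 * k) = rr c.
Proof. by rewrite /rr addnAC addnC mulnC modnMDl. Qed.

Lemma sumg_iota k : \sum_(x <- iota 1 (4 * k)) gg (rr x) = (4 * k)%N%:Z.
Proof.
elim: k => [|k IH]; first by rewrite big_nil.
rewrite (_ : (4 * k.+1 = 4 * k + 4)%N); last lia.
rewrite iotaD big_cat IH /= !big_cons big_nil.
have r1 : rr (1 + 4 * k) = 1%N by rewrite rr_shift.
have r2 : rr (1 + 4 * k).+1 = 2%N by rewrite -addSn rr_shift.
have r3 : rr (1 + 4 * k).+2 = 3%N by rewrite -!addSn rr_shift.
have r4 : rr (1 + 4 * k).+3 = 4%N by rewrite -!addSn rr_shift.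
rewrite r1 r2 r3 r4 /gg /=; lia.
Qed.

Lemma sum_bound_le (r : seq nat) (S : nat -> int) :
  (forall b, b \in r -> S b <= 8) -> \sum_(b <- r) S b <= (8 * size r)%N%:Z.
Proof.
elim: r => [|a r IH] h; first by rewrite big_nil.
rewrite big_cons /=.
have h1 := IH (fun b hb => h b ltac:(by rewrite inE hb orbT)).
have h2 := h a (mem_head _ _).
rewrite mulnS PoszD; exact: lerD h2 h1.
Qed.

Lemma sum_bound_lt (r : seq nat) (S : nat -> int) b0 :
  (forall b, b \in r -> S b <= 8) -> b0 \in r -> S b0 <= 7 ->
  \sum_(b <- r) S b <= (8 * size r)%N%:Z - 1.
Proof.
elim: r => [|a r IH] h //; rewrite inE big_cons /= => /orP[/eqP <-|hb] h7.
  have h1 := sum_bound_le r S (fun b hb => h b ltac:(by rewrite inE hb orbT)).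
  rewrite mulnS PoszD addrAC (_ : (8:int) - 1 = 7) //.
  exact: lerD h7 h1.
have h1 := IH (fun b hb => h b ltac:(by rewrite inE hb orbT)) hb h7.
have h2 := h a (mem_head _ _).
rewrite mulnS PoszD -addrA; exact: lerD h2 h1.
Qed.

Arguments mem_coords' {p L x}.
Arguments mem_coords {p L}.
Arguments rr : simpl never.
Arguments blk : simpl never.

Lemma blk_range k x : (1 <= x <= 4 * k)%N -> (blk x \in iota 1 k).
Proof. rewrite mem_iota /blk => h; apply/andP; split; [rewrite divn_gt0 //|rewrite ltn_divLR]; lia. Qed.

Lemma partition_HH k L : (forall p, p \in L -> (1 <= p.1 <= 4 * k)%N) ->
  \sum_(p <- L) HH p =
  \sum_(b <- iota 1 k) \sum_(p <- [seq p <- L | same_blk p && (blk p.1 == b)]) hh (rr p.1) (rr p.2).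
Proof.
move=> hL.
under [RHS]eq_bigr => b _ do rewrite big_filter big_mkcond.
rewrite exchange_big /=; apply: eq_big_seq => p hp.
rewrite /HH; case: (boolP (same_blk p)) => sp /=.
  rewrite (bigD1_seq (blk p.1)) ?iota_uniq ?blk_range ?hL //= eqxx big1 ?addr0 //.
  by move=> b /negbTE; rewrite eq_sym => ->.
by rewrite big1.
Qed.

Lemma same_rr p : (p.1 < p.2)%N -> same_blk p ->
  [&& 0 < rr p.1, rr p.1 < rr p.2 & rr p.2 <= 4]%N.
Proof.
case: p => i j /= ij /eqP hb.
have e1 := blk_rr i; have e2 := blk_rr j; have r1 := rr_range i; have r2 := rr_range j.
simpl in hb; lia.
Qed.

Lemma blk_rr_inj x y : blk x = blk y -> rr x = rr y -> x = y.
Proof. have := blk_rr x; have := blk_rr y; lia. Qed.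

Theorem lemma5p4 (k : nat) (s : seq nat) :
  (1 <= k)%N -> inP k s -> ~ inD k s ->
  Ord1 k s < (6 * k)%:R / 5%:R.
Proof.
move=> hk [hperm hinc hlt] hnD.
have hsize : size s = (4 * k)%N by rewrite (perm_size hperm) size_iota.
have huniq : uniq s by rewrite (perm_uniq hperm) iota_uniq.
have hrange : forall x, x \in s -> (1 <= x <= 4 * k)%N.
  by move=> x; rewrite (perm_mem hperm) mem_iota; lia.
set L := pairs k s.
have hc : coords L = s by apply: coords_pairs.
have hmemL : forall p, p \in L -> (p.1 < p.2)%N.
  move=> p /mapP [l hl ->] /=; apply: hlt; move: hl; rewrite mem_iota; lia.
have hr1 : forall p, p \in L -> (1 <= p.1 <= 4 * k)%N.
  by move=> p /mem_coords /andP[h1 _]; apply: hrange; rewrite -hc.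
have [p0 p0L np0] : exists2 p0, p0 \in L & ~~ same_blk p0.
  case: (boolP (all same_blk L)) => [hall|/allPn //].
  exfalso; apply: hnD; split; first by split.
  move=> l hl; apply/eqP; apply: (allP hall (sg s (2 * l - 1), sg s (2 * l))).
  rewrite /L /pairs; apply: (map_f (fun l => (sg s (2 * l - 1), sg s (2 * l)))); rewrite mem_iota; lia.
have hucL : uniq (coords L) by rewrite hc.
have step1 : \sum_(p <- L) Wi p <= \sum_(p <- L) (gg (rr p.1) + gg (rr p.2)) + \sum_(p <- L) HH p.
  rewrite -big_split /= !big_seq; apply: ler_sum => -[i j] hp.
  exact: wle (hmemL _ hp).
have step2 : \sum_(p <- L) (gg (rr p.1) + gg (rr p.2)) = (4 * k)%N%:Z.
  rewrite (sum_coords (fun x => gg (rr x))) hc -(sumg_iota k).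
  exact: perm_big.
set Lb := fun b => [seq p <- L | same_blk p && (blk p.1 == b)].
set Sb := fun b => \sum_(p <- Lb b) hh (rr p.1) (rr p.2).
have hR : forall b, (forall q, q \in [seq (rr p.1, rr p.2) | p <- Lb b] ->
    [&& 0 < q.1, q.1 < q.2 & q.2 <= 4])%N /\ uniq (coords [seq (rr p.1, rr p.2) | p <- Lb b]).
  move=> b; split.
    move=> q /mapP [p]; rewrite mem_filter => /andP[/andP[sp _] pL] -> /=.
    exact: same_rr _ (hmemL _ pL) sp.
  rewrite coords_map map_inj_in_uniq.
    exact: subseq_uniq (coords_filter_subseq _ _) hucL.
  have hb : forall x, x \in coords (Lb b) -> blk x = b.
    move=> x /coordsP [p]; rewrite mem_filter => /andP[/andP[/eqP sp /eqP pb] _].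
    by rewrite !inE => /orP[]/eqP ->; rewrite -?sp.
  by move=> x y hx hy; apply: blk_rr_inj; rewrite hb ?(hb y).
have hS : forall b, Sb b = \sum_(q <- [seq (rr p.1, rr p.2) | p <- Lb b]) hh q.1 q.2.
  by move=> b; rewrite /Sb big_map.
have hle8 : forall b, b \in iota 1 k -> Sb b <= 8.
  move=> b _; rewrite hS; case: (hR b) => h1 h2; exact: (block_bound _ h1 h2).1.
set b0 := blk p0.1.
have hb0 : b0 \in iota 1 k by apply: blk_range; apply: hr1.
have hle7 : Sb b0 <= 7.
  rewrite hS; case: (hR b0) => h1 h2; apply: (block_bound _ h1 h2).2 (rr p0.1) _ _.
    by have := rr_range p0.1.
  rewrite coords_map; apply/negP => /mapP [x hx hxr].
  have hxL : x \in coords (Lb b0) := hx.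
  move: hx => /coordsP [p]; rewrite mem_filter => /andP[/andP[/eqP sp /eqP pb] pL] hxp.
  have bx : blk x = b0 by move: hxp; rewrite !inE => /orP[]/eqP ->; rewrite -?sp.
  have ex : x = p0.1 by apply: blk_rr_inj.
  have epp : p = p0.
    apply: (coords_share _ _ _ _ hucL pL p0L hxp); by rewrite ex !inE eqxx.
  by move: np0; rewrite -epp /same_blk sp eqxx.
have step3 : \sum_(p <- L) HH p <= (8 * k)%N%:Z - 1.
  rewrite (partition_HH _ _ hr1) -[X in (8 * X)%N](size_iota 1 k).
  exact: (sum_bound_lt _ _ _ hle8 hb0 hle7).
have hW : \sum_(p <- L) Wi p < (12 * k)%N%:Z.
  move: step1; rewrite step2 => h; apply: (le_lt_trans h).
  move: step3; lia.
rewrite Ord1_sum.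
have : ((\sum_(p <- L) Wi p)%:~R : rat) < ((12 * k)%N%:Z)%:~R by rewrite ltr_int.
move: (\sum_(p <- L) Wi p) => S.
rewrite -pmulrn natrM => h.
rewrite natrM in h; lra.
Qed.
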